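(* Let $G=F\times H$ be a direct product of finite abelian groups, where $H=\bigoplus_{i=1}^n\mathbb Z/p^{r_i}\mathbb Z$. Then for any $a\in\mathcal F(G,K)$: (a) $S_{\Delta_a}=S_{\Delta_{a_*}}\otimes 1_H$, where $a_*\in\mathcal F(F,K)$ is given by $a_*(u')=\sum_{u''\in H}a(u'+u'')$; (b) $\mathrm{CharPoly}_{a,G}=(\mathrm{CharPoly}_{a_*,F})^{|H|}$. Consequently there exists a nonzero $a$-harmonic function on $G$ if and only if there exists a nonzero $a_*$-harmonic function on $F$.
   Context: $K$ is a field of characteristic $p>0$, $\bar K$ its algebraic closure. For a finite abelian group $G$, $\mathcal F(G,K)$ is the space of functions $G\to K$; $(f*a)(g)=\sum_hf(h)a(g-h)$ and $\Delta_af=f*a$. $\mathrm{CharPoly}_{a,G}$ is the characteristic polynomial of $\Delta_a$ on $\mathcal F(G,K)$; $f$ is $a$-harmonic if $f*a=0$. For an endomorphism $A$ of a finite-dimensional $K$-vector space, $A=S_A+N_A$ is its Jordan decomposition over $\bar K$ ($S_A$ semisimple, $N_A$ nilpotent, commuting). $\mathcal F(G,\bar K)$ is identified with $\mathcal F(F,\bar K)\otimes\mathcal F(H,\bar K)$ via $f_1\otimes f_2\mapsto((u',u'')\mapsto f_1(u')f_2(u''))$, and $1_H$ is the identity of $\mathcal F(H,\bar K)$. *)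

(* Defs.v *)
From HB Require Import structures.
From mathcomp Require Import all_boot all_order all_algebra.
Set Implicit Arguments. Unset Strict Implicit. Unset Printing Implicit Defensive.
Import GRing.Theory.
Local Open Scope ring_scope.

HB.instance Definition _ (F H : finZmodType) := GRing.Zmodule.on (F * H)%type.

(* Functions G -> K are column vectors indexed by enum_rank; an operator on
   F(G,K) is represented by its matrix in the standard basis of indicators. *)
Definition opmx (R : Type) (T : finType) (k : T -> T -> R) : 'M[R]_#|T| :=
  \matrix_(i, j) k (enum_val i) (enum_val j).

Definition conv_mx (R : nzRingType) (G : finZmodType) (a : G -> R) : 'M[R]_#|G| :=
  opmx (fun g h : G => a (g - h)).

Definition harmonic (R : nzRingType) (G : finZmodType) (a : G -> R) (f : G -> R) :=
  forall g : G, \sum_(h : G) f h * a (g - h) = 0.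

Definition astar (R : nzRingType) (F H : finZmodType) (a : F * H -> R) : F -> R :=
  fun u' => \sum_(u'' : H) a (u', u'').

(* S (x) 1_H, as an operator on F(F x H) = F(F) (x) F(H) *)
Definition tens1 (R : nzRingType) (F H : finZmodType) (S : 'M[R]_#|F|) : 'M[R]_#|{: F * H}| :=
  opmx (fun g h : F * H => S (enum_rank g.1) (enum_rank h.1) * (g.2 == h.2)%:R).

Definition mx_nilpotent (R : nzRingType) n (N : 'M[R]_n) :=
  exists k : nat, iter k (mulmx N) 1%:M = 0.

(* S is the semisimple part of the Jordan decomposition of A (over an
   algebraically closed field: semisimple = diagonalizable). *)
Definition ss_part (L : fieldType) n (A S : 'M[L]_n) :=
  diagonalizable S /\
  exists N : 'M[L]_n, [/\ mx_nilpotent N, S *m N = N *m S & A = S + N].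

(* Main.v *)
Require Import Defs.
From HB Require Import structures.
From mathcomp Require Import all_boot all_order all_algebra all_fingroup all_solvable.
Set Implicit Arguments. Unset Strict Implicit. Unset Printing Implicit Defensive.
Import GRing.Theory.
Local Open Scope ring_scope.

Section Frob.
Variables (V : pzRingType) (p : nat).
Hypothesis pr : prime p.
Hypothesis chV : forall x : V, x *+ p = 0.

Lemma frobD (x y : V) : GRing.comm x y -> (x + y) ^+ p = x ^+ p + y ^+ p.
Proof.
move=> cxy; rewrite exprDn_comm //.
have p2 := prime_gt1 pr.
move: pr chV; case E: p p2 => [|[|p']] //= _ pr' ch'.
rewrite big_ord_recr big_ord_recl /= subnn subn0.
rewrite !bin0 binn !mulr1n expr0 mulr1 mul1r big1 ?addr0 // => i _.
have hi : (0 < bump 0 (widen_ord (leqnSn _) i) < p'.+2)%N.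
  rewrite /bump /= add1n ltnS. exact: ltn_ord i.
have /dvdnP [m ->] := prime_dvd_bin pr' hi.
by rewrite mulnC mulrnA ch' mul0rn.
Qed.

Lemma frobDk (x y : V) k : GRing.comm x y -> (x + y) ^+ (p ^ k) = x ^+ (p ^ k) + y ^+ (p ^ k).
Proof.
move=> cxy; elim: k => [|k IH]; first by rewrite !expn0 !expr1.
rewrite expnSr !exprM IH frobD //.
by apply: commrX; apply: commr_sym; apply: commrX; apply: commr_sym.
Qed.

Lemma frob_sum (I : Type) (r : seq I) (P : pred I) (x : I -> V) k :
  (forall i j, GRing.comm (x i) (x j)) ->
  (\sum_(i <- r | P i) x i) ^+ (p ^ k) = \sum_(i <- r | P i) x i ^+ (p ^ k).
Proof.
move=> cx; elim: r => [|i r IH]; first by by rewrite !big_nil expr0n expn_eq0 eqn0Ngt (prime_gt0 pr).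
rewrite !big_cons; case: (P i) => //.
rewrite frobDk ?IH //; apply: commr_sum => j _; exact: cx.
Qed.
End Frob.

Lemma sum_enum (T : finType) (V : nmodType) (f : T -> V) :
  \sum_(j < #|T|) f (enum_val j) = \sum_x f x.
Proof. by rewrite (big_enum_val (A := T)). Qed.

Lemma opmx_mul (R : pzSemiRingType) (T : finType) (k l : T -> T -> R) :
  opmx k *m opmx l = opmx (fun g h => \sum_x k g x * l x h).
Proof.
apply/matrixP => i j; rewrite !mxE -(sum_enum (fun x => k (enum_val i) x * l x (enum_val j))); apply: eq_bigr => x _.
by rewrite !mxE.
Qed.

Section Conv.
Variables (R : comNzRingType) (G : finZmodType).

Definition Pm (u : G) : 'M[R]_#|G| := conv_mx (fun g => (g == u)%:R).

Lemma conv_mxC (b c : G -> R) : conv_mx b *m conv_mx c = conv_mx c *m conv_mx b.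
Proof.
rewrite /conv_mx !opmx_mul; apply/matrixP => i j; rewrite !mxE.
set g := enum_val i; set h := enum_val j.
rewrite (reindex_inj (inj_comp (addrI (g + h)) oppr_inj)) /=.
apply: eq_bigr => x _; rewrite mulrC; congr (_ * _); congr (_ _).
  by rewrite addrAC addrK.
by rewrite opprB opprD addrCA addNKr.
Qed.

Lemma conv_mx_sum (b : G -> R) : conv_mx b = \sum_u b u *: Pm u.
Proof.
apply/matrixP => i j; rewrite summxE !mxE.
rewrite (bigD1 (enum_val i - enum_val j)) //= big1 ?addr0.
  by rewrite !mxE eqxx mulr1.
by move=> u /negPf nu; rewrite !mxE eq_sym nu mulr0.
Qed.

Lemma conv_mxB (b c : G -> R) : conv_mx (fun u => b u - c u) = conv_mx b - conv_mx c.
Proof. by apply/matrixP => i j; rewrite !mxE. Qed.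

Lemma conv_mxD (b c : G -> R) : conv_mx (fun u => b u + c u) = conv_mx b + conv_mx c.
Proof. by apply/matrixP => i j; rewrite !mxE. Qed.

Lemma Pm_mul (u v : G) : Pm u *m Pm v = Pm (u + v).
Proof.
rewrite /Pm /conv_mx opmx_mul; apply/matrixP => i j; rewrite !mxE.
set g := enum_val i; set h := enum_val j.
rewrite (bigD1 (g - u)) //= big1 ?addr0.
  rewrite opprB addrC subrK eqxx mul1r; congr (_%:R).
  congr (nat_of_bool _); apply/idP/idP => /eqP E; apply/eqP.
    by rewrite -E addrA [u + _]addrC subrK.
  by rewrite addrAC E addrC addKr.
move=> x nx; case: eqP => [E|]; last by rewrite mul0r.
by case/eqP: nx; rewrite -E opprB addrC subrK.
Qed.

Lemma Pm0 : Pm 0 = 1%:M.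
Proof.
apply/matrixP => i j; rewrite !mxE subr_eq0.
by rewrite (inj_eq enum_val_inj).
Qed.

Lemma Pm_exp (u : G) n : Pm u ^+ n = Pm (u *+ n).
Proof.
elim: n => [|n IH]; first by rewrite expr0 mulr0n Pm0.
by rewrite exprS IH -mulmxE Pm_mul mulrS.
Qed.

Lemma Pm_comm (u v : G) : GRing.comm (Pm u) (Pm v).
Proof. by rewrite /GRing.comm -!mulmxE !Pm_mul addrC. Qed.

End Conv.

Lemma mx_char (R : pzRingType) p n : p%:R = 0 :> R -> forall M : 'M[R]_n, M *+ p = 0.
Proof. by move=> hp M; rewrite -scaler_nat hp scale0r. Qed.

Section Tens.
Variables (R : pzRingType) (F T : finType).

Definition tensG (S : 'M[R]_#|F|) : 'M[R]_#|{: F * T}| :=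
  opmx (fun g h : F * T => S (enum_rank g.1) (enum_rank h.1) * (g.2 == h.2)%:R).

Lemma tensM (S S' : 'M[R]_#|F|) : tensG (S *m S') = tensG S *m tensG S'.
Proof.
rewrite /tensG opmx_mul; apply/matrixP => i j; rewrite !mxE.
set g := enum_val i; set h := enum_val j.
have -> : \sum_j S (enum_rank g.1) j * S' j (enum_rank h.1) =
   \sum_(x : F) S (enum_rank g.1) (enum_rank x) * S' (enum_rank x) (enum_rank h.1).
  by rewrite -(sum_enum (fun x : F => S (enum_rank g.1) (enum_rank x) * S' (enum_rank x) (enum_rank h.1))); apply: eq_bigr => k _; rewrite enum_valK.
rewrite mulr_suml -(pair_bigA _ (fun a b => S (enum_rank g.1) (enum_rank a) * (g.2 == b)%:R * (S' (enum_rank a) (enum_rank h.1) * (b == h.2)%:R))) /=.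
apply: eq_bigr => x1 _.
rewrite (bigD1 g.2) //= big1 ?addr0.
  by rewrite eqxx mulr1 mulrA.
by move=> y ny; rewrite eq_sym (negPf ny) mulr0 mul0r.
Qed.

Lemma tensD (S S' : 'M[R]_#|F|) : tensG (S + S') = tensG S + tensG S'.
Proof. by apply/matrixP => i j; rewrite !mxE mulrDl. Qed.

Lemma tensN (S : 'M[R]_#|F|) : tensG (- S) = - tensG S.
Proof. by apply/matrixP => i j; rewrite !mxE mulNr. Qed.

Lemma tensB (S S' : 'M[R]_#|F|) : tensG (S - S') = tensG S - tensG S'.
Proof. by rewrite tensD tensN. Qed.

Lemma tens_scalar (r : R) : tensG r%:M = r%:M.
Proof.
apply/matrixP => i j; rewrite !mxE (inj_eq enum_rank_inj) -(inj_eq enum_val_inj).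
case: (enum_val i) (enum_val j) => [g1 g2] [h1 h2] /=.
by rewrite xpair_eqE; case: eqP; case: eqP; rewrite /= ?mulr1 ?mulr0 ?mul0r ?mulr0n ?mulr1n.
Qed.

Lemma tens0 : tensG 0 = 0.
Proof. by apply/matrixP => i j; rewrite !mxE mul0r. Qed.

Lemma tensX (S : 'M[R]_#|F|) n : tensG (S ^+ n) = tensG S ^+ n.
Proof.
elim: n => [|n IH]; first by rewrite !expr0 tens_scalar.
by rewrite !exprS -!mulmxE tensM IH.
Qed.

Lemma tens_prod (I : Type) (r : seq I) (f : I -> 'M[R]_#|F|) :
  tensG (\prod_(i <- r) f i) = \prod_(i <- r) tensG (f i).
Proof.
elim: r => [|i r IH]; first by rewrite !big_nil tens_scalar.
by rewrite !big_cons -!mulmxE tensM IH.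
Qed.
End Tens.

Lemma tens1E (R : nzRingType) (F H : finZmodType) (S : 'M[R]_#|F|) :
  tens1 H S = tensG H S.
Proof. by []. Qed.

Lemma tens_conv (R : nzRingType) (F H : finZmodType) (c : F -> R) :
  tensG H (conv_mx c) = conv_mx (fun u : F * H => c u.1 * (u.2 == 0)%:R).
Proof.
apply/matrixP => i j; rewrite !mxE !enum_rankK subr_eq0.
by case: (enum_val i) (enum_val j) => [g1 g2] [h1 h2].
Qed.

Lemma cardH_mul (H : finZmodType) (h : H) : h *+ #|H| = 0.
Proof. by rewrite -FinRing.zmodXgE -cardsT expg_cardG ?inE. Qed.

Lemma pair_mulrn (F H : finZmodType) (u : F * H) n : u *+ n = (u.1 *+ n, u.2 *+ n).
Proof.
elim: n => [|n IH]; first by rewrite !mulr0n.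
by rewrite !mulrS IH; case: u {IH}.
Qed.

Lemma scale_exp (R : comNzRingType) n (a : R) (M : 'M[R]_n) k :
  (a *: M) ^+ k = a ^+ k *: M ^+ k.
Proof.
elim: k => [|k IH]; first by rewrite !expr0 scale1r.
by rewrite !exprS IH -!mulmxE -scalemxAl -scalemxAr scalerA.
Qed.

Lemma scale_comm (R : comNzRingType) n (a b : R) (M N : 'M[R]_n) :
  GRing.comm M N -> GRing.comm (a *: M) (b *: N).
Proof.
rewrite /GRing.comm -!mulmxE => E.
by rewrite -!scalemxAl -!scalemxAr !scalerA E mulrC.
Qed.

Section Nilp.
Variables (R : comNzRingType) (p : nat) (F H : finZmodType).
Hypothesis pr : prime p.
Hypothesis chR : p%:R = 0 :> R.
Variable e : nat.
Hypothesis cardH : #|H| = (p ^ e)%N.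

Definition cstar (b : F * H -> R) (u : F * H) : R := astar b u.1 * (u.2 == 0)%:R.

Lemma chR' (x : R) : x *+ p = 0.
Proof. by rewrite -mulr_natr chR mulr0. Qed.

Lemma conv_nilp (b : F * H -> R) :
  (conv_mx b - conv_mx (cstar b)) ^+ (p ^ e) = 0.
Proof.
rewrite -conv_mxB conv_mx_sum frob_sum //; last first.
  by move=> u v; apply: scale_comm; apply: Pm_comm.
  exact: mx_char.
under eq_bigr do rewrite scale_exp Pm_exp -cardH pair_mulrn cardH_mul.
rewrite (eq_bigr (fun i => (fun u1 u2 => (b (u1, u2) - cstar b (u1, u2)) ^+ #|H| *: Pm R (u1 *+ #|H|, 0)) i.1 i.2)); last by case.
rewrite -(pair_bigA _ (fun u1 u2 => (b (u1, u2) - cstar b (u1, u2)) ^+ #|H| *: Pm R (u1 *+ #|H|, 0))) /=.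
apply: big1 => u1 _.
rewrite -scaler_suml cardH -(@frob_sum R p pr chR') //; last by move=> ? ?; apply: mulrC.
rewrite sumrB /cstar /=.
have -> : \sum_(i : H) astar b u1 * (i == 0)%:R = astar b u1.
  rewrite (bigD1 0) //= eqxx mulr1 big1 ?addr0 // => h /negPf ->.
  by rewrite mulr0.
by rewrite subrr expr0n expn_eq0 eqn0Ngt prime_gt0 // scale0r.
Qed.
End Nilp.

Section Det.
Variable R : comNzRingType.

Lemma det_reidx n m (g : 'I_n -> 'I_m) (M : 'M[R]_m) :
  n = m -> injective g -> \det (\matrix_(i, j) M (g i) (g j)) = \det M.
Proof.
move=> e; case: m / e in g M * => ig.
set s := perm ig.
have -> : \matrix_(i, j) M (g i) (g j) = row_perm s (col_perm s M).
  by apply/matrixP => i j; rewrite !mxE !permE.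
rewrite row_permE col_permE !det_mulmx !det_perm odd_permV.
by rewrite mulrCA -signr_addb addbb expr0 mulr1.
Qed.

Lemma det_bijT (T1 T2 : finType) (phi : T1 -> T2) (k : T2 -> T2 -> R) :
  injective phi -> #|T1| = #|T2| ->
  \det (opmx (fun x y => k (phi x) (phi y))) = \det (opmx k).
Proof.
move=> iphi e.
rewrite -(det_reidx (g := fun i => enum_rank (phi (enum_val i))) _ e).
  by congr (\det _); apply/matrixP => i j; rewrite !mxE !enum_rankK.
by move=> i j /enum_rank_inj /iphi /enum_val_inj.
Qed.

Lemma det_sum_block (T1 T2 : finType) (k : T1 + T2 -> T1 + T2 -> R) :
  (forall x y, k (inr x) (inl y) = 0) ->
  \det (opmx k) = \det (opmx (fun x y => k (inl x) (inl y))) *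
                  \det (opmx (fun x y => k (inr x) (inr y))).
Proof.
move=> hk.
pose f (i : 'I_(#|T1| + #|T2|)) : T1 + T2 :=
  match split i with inl j => inl (enum_val j) | inr j => inr (enum_val j) end.
have fi : injective f.
  move=> i j; rewrite /f -{2}(splitK i) -{2}(splitK j).
  case: (split i) => a; case: (split j) => b //= [] /enum_val_inj -> //.
rewrite -(det_reidx (g := fun i => enum_rank (f i)) _ (esym (card_sum T1 T2))); last first.
  by move=> i j /enum_rank_inj /fi.
set M := \matrix_(i, j) _.
have sl : forall i, split (lshift #|T2| i) = inl i := fun i => unsplitK (inl i).
have sr : forall i, split (rshift #|T1| i) = inr i := fun i => unsplitK (inr i).
rewrite -[M]submxK.
have -> : dlsubmx M = 0.
  by apply/matrixP => i j; rewrite !mxE !enum_rankK /f sl sr hk.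
rewrite det_ublock; congr (_ * _); congr (\det _).
  by apply/matrixP => i j; rewrite !mxE !enum_rankK /f !sl.
by apply/matrixP => i j; rewrite !mxE !enum_rankK /f !sr.
Qed.

Lemma det_tens (F : finType) (B : 'M[R]_#|F|) n :
  forall T : finType, #|T| = n -> \det (tensG T B) = \det B ^+ n.
Proof.
elim: n => [|n IH] T cT.
  rewrite expr0 /tensG -(det_reidx (n := 0) (g := fun i : 'I_0 => match i with Ordinal _ h => False_rect _ (notF h) end)).
  - by rewrite det_mx00.
  - by rewrite card_prod cT muln0.
  - by case.
have [t0 _] : exists t0 : T, true.
  by move: cT; case: (enum T) (cardE T) => [|t s] -> //; exists t.
pose T' := {x : T | x != t0}.
have cT' : #|{: T'}| = n by rewrite card_sig cardC1 cT.
pose phi (x : F + F * T') : F * T :=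
  match x with inl y => (y, t0) | inr y => (y.1, val y.2) end.
have iphi : injective phi.
  case=> [y|[y1 y2]] [z|[z1 z2]] //= [].
  - by move=> ->.
  - by move=> _ E; have := valP z2; rewrite /= -E eqxx.
  - by move=> _ E; have := valP y2; rewrite /= E eqxx.
  - by move=> -> /val_inj ->.
rewrite /tensG -(det_bijT (phi := phi)) //; last first.
  by rewrite card_sum card_prod cT' card_prod cT mulnS.
rewrite det_sum_block; last first.
  by case=> y1 y2 z /=; rewrite (negPf (valP y2)) mulr0.
rewrite exprS -(IH T') //; congr (_ * _).
  by congr (\det _); apply/matrixP => i j; rewrite !mxE !enum_valK eqxx mulr1.
Qed.
End Det.

Lemma det_exp (R : comNzRingType) n (M : 'M[R]_n) k : \det (M ^+ k) = \det M ^+ k.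
Proof.
elim: k => [|k IH]; first by rewrite !expr0 det1.
by rewrite !exprS -mulmxE det_mulmx IH.
Qed.

Lemma map_mx_exp (aR rR : nzRingType) (f : {rmorphism aR -> rR}) n (M : 'M[aR]_n) k :
  map_mx f (M ^+ k) = map_mx f M ^+ k.
Proof.
elim: k => [|k IH]; first by rewrite !expr0 map_mx1.
by rewrite !exprS -!mulmxE map_mxM IH.
Qed.

Section CP.
Variables (R : fieldType) (p : nat).
Hypothesis pr : prime p.
Hypothesis chR : p%:R = 0 :> R.

Lemma polychar (x : {poly R}) : x *+ p = 0.
Proof. by rewrite -mulr_natr -(rmorph_nat (@polyC R)) chR mulr0. Qed.

Lemma frob_inj_poly k (x y : {poly R}) : x ^+ (p ^ k) = y ^+ (p ^ k) -> x = y.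
Proof.
move=> E.
have := frobDk pr polychar k (x := x - y) (y := y) (mulrC _ _).
rewrite subrK E => /eqP; rewrite eq_sym -subr_eq0 addrK expf_eq0 subr_eq0 => /andP [_ /eqP //].
Qed.

Lemma cp_nil n (X D : 'M[R]_n) k : X *m D = D *m X -> D ^+ (p ^ k) = 0 ->
  char_poly (X + D) = char_poly X.
Proof.
move=> cXD nD; apply: (@frob_inj_poly k).
rewrite /char_poly -!det_exp; congr (\det _).
rewrite /char_poly_mx map_mxD opprD addrA.
rewrite (frobDk pr (@mx_char _ p _ (polychar 1))); last first.
rewrite /GRing.comm mulrN mulNr; congr (- _).
rewrite -!mulmxE mulmxBl mulmxBr -!map_mxM cXD scalar_mxC //.
rewrite exprNn -map_mx_exp nD map_mx0 mulr0 addr0 //.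
Qed.

Lemma cp_tens (F T : finType) (M : 'M[R]_#|F|) :
  char_poly (tensG T M) = char_poly M ^+ #|T|.
Proof.
rewrite /char_poly -(det_tens _ (erefl #|T|)); congr (\det _).
apply/matrixP => i j; rewrite !mxE (inj_eq enum_rank_inj) -(inj_eq enum_val_inj).
case: (enum_val i) (enum_val j) => [g1 g2] [h1 h2] /=.
rewrite xpair_eqE rmorphM /= mulrBl; congr (_ - _).
by case: eqP; case: eqP; rewrite /= ?mulr1 ?mulr0 ?mul0r ?mulr0n ?mulr1n.
by case: eqP.
Qed.
End CP.

Section Diag.
Variable R : fieldType.

Lemma diag_prod n (S : 'M[R]_n) : diagonalizable S ->
  exists2 rs : seq R, uniq rs & \prod_(r <- rs) (S - r%:M) = 0.
Proof.
case: n S => [|n] S dS.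
  by exists [::] => //; rewrite flatmx0.
have [rs urs dv] := (diagonalizableP S).1 dS.
exists rs => //.
move/mxminpoly_minP: dv; rewrite rmorph_prod /= => <-.
by apply: eq_bigr => r _; rewrite rmorphB /= horner_mx_X horner_mx_C.
Qed.

Lemma prod_diag n (S : 'M[R]_n) (rs : seq R) : uniq rs ->
  \prod_(r <- rs) (S - r%:M) = 0 -> diagonalizable S.
Proof.
case: n S => [|n] S urs E.
  by rewrite flatmx0; apply: diagonalizable0.
apply/diagonalizableP; exists rs => //.
apply/mxminpoly_minP; rewrite rmorph_prod /= -E.
by apply: eq_bigr => r _; rewrite rmorphB /= horner_mx_X horner_mx_C.
Qed.

Lemma interp (phi : R -> R) : injective phi -> forall rs : seq R, uniq rs ->
  exists f : {poly R}, forall r, r \in rs -> f.[phi r] = r.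
Proof.
move=> iphi; elim=> [|r rs IH] /=; first by exists 0.
case/andP => nr /IH [f hf].
pose w := \prod_(s <- rs) ('X - (phi s)%:P).
have wr : w.[phi r] != 0.
  rewrite horner_prod prodf_seq_neq0; apply/allP => s sr /=.
  rewrite hornerXsubC subr_eq0; apply/negP => /eqP /iphi E.
  by move: nr; rewrite E sr.
have ws : forall s, s \in rs -> w.[phi s] = 0.
  move=> s sr; rewrite horner_prod (big_rem s) //= hornerXsubC subrr mul0r //.
exists (f + ((r - f.[phi r]) / w.[phi r]) *: w) => s; rewrite inE => /orP [/eqP -> | sr].
  by rewrite hornerD hornerZ mulfVK // addrC subrK.
by rewrite hornerD hornerZ (ws s sr) mulr0 addr0 hf.
Qed.

Lemma horner_mx_compXn n (Y : 'M[R]_n.+1) (f : {poly R}) Q :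
  horner_mx Y (f \Po 'X^Q) = horner_mx (Y ^+ Q) f.
Proof.
have -> : horner_mx (Y ^+ Q) f = horner_mx (Y ^+ Q) (\sum_(i < size f) f`_i *: 'X^i).
  by rewrite -poly_def coefK.
rewrite comp_polyE !linear_sum /=.
apply: eq_bigr => i _; rewrite !linearZ /= !rmorphXn /= horner_mx_X.
by rewrite horner_mx_X.
Qed.

Variable p : nat.
Hypothesis pr : prime p.
Hypothesis chR : p%:R = 0 :> R.

Lemma chR'' (x : R) : x *+ p = 0.
Proof. by rewrite -mulr_natr chR mulr0. Qed.

Lemma frob_inj k : injective (fun x : R => x ^+ (p ^ k)).
Proof.
move=> x y /= E.
have := frobDk pr chR'' k (x := x - y) (y := y) (mulrC _ _).
rewrite subrK E => /eqP; rewrite eq_sym -subr_eq0 addrK expf_eq0 subr_eq0 => /andP [_ /eqP //].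
Qed.

Lemma key n (Y B : 'M[R]_n) k :
  (exists2 rs : seq R, uniq rs & \prod_(r <- rs) (Y - r%:M) = 0) ->
  B *m Y ^+ (p ^ k) = Y ^+ (p ^ k) *m B -> B *m Y = Y *m B.
Proof.
case: n Y B => [|n] Y B [rs urs E] cB; first by rewrite !flatmx0.
have [f hf] := interp (@frob_inj k) urs.
pose g := f \Po 'X^(p ^ k) - 'X.
have rg : all (root g) rs.
  apply/allP => r rr; rewrite /root /g hornerD hornerN horner_comp hornerXn hornerX.
  by rewrite hf // subrr.
have [q gq] : exists q, g = q * \prod_(z <- rs) ('X - z%:P).
  by apply: uniq_roots_prod_XsubC rg _; rewrite uniq_rootsE.
have hY : horner_mx Y (f \Po 'X^(p ^ k)) = Y.
  apply/eqP; rewrite -subr_eq0 -[X in _ - X](horner_mx_X Y) -rmorphB /= -/g gq.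
  rewrite rmorphM rmorph_prod /=.
  have -> : \prod_(r <- rs) horner_mx Y ('X - r%:P) = \prod_(r <- rs) (Y - r%:M).
    by apply: eq_bigr => r _; rewrite rmorphB /= horner_mx_X horner_mx_C.
  by rewrite E mulr0.
rewrite -hY horner_mx_compXn.
exact: comm_mx_horner.
Qed.
End Diag.

Lemma iter_mulmx (R : pzRingType) n (N : 'M[R]_n) k : iter k (mulmx N) 1%:M = N ^+ k.
Proof. by elim: k => [|k IH] //=; rewrite IH exprS mulmxE. Qed.

Lemma exp_ge (R : pzRingType) (x : R) k m : (k <= m)%N -> x ^+ k = 0 -> x ^+ m = 0.
Proof. by move=> km xk; rewrite -(subnKC km) exprD xk mul0r. Qed.

Section PartA.
Variables (R : fieldType) (p : nat).
Hypothesis pr : prime p.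
Hypothesis chR : p%:R = 0 :> R.
Variables (F H : finZmodType) (e : nat).
Hypothesis cardH : #|H| = (p ^ e)%N.

Lemma part_a (b : F * H -> R) (S : 'M[R]_#|F|) :
  ss_part (conv_mx (astar b)) S -> ss_part (conv_mx b) (tensG H S).
Proof.
case=> dS [N [[k]]]; rewrite iter_mulmx => nN cSN eA.
set A := conv_mx b; set As := conv_mx (astar b).
set X := tensG H As.
have eX : X = conv_mx (cstar b) by rewrite /X /As tens_conv.
set D := A - X.
have nD : D ^+ (p ^ e) = 0 by rewrite /D eX conv_nilp.
pose Q := (p ^ (e + k))%N.
have ch := @mx_char R p _ chR.
have kQ : (k <= Q)%N.
  apply: leq_trans (ltnW (ltn_expl _ (prime_gt1 pr))) _.
  by rewrite leq_exp2l ?leq_addl ?prime_gt1.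
have eQ : Q = (p ^ e * p ^ k)%N by rewrite /Q expnD.
have nDQ : D ^+ Q = 0.
  by rewrite eQ exprM nD expr0n expn_eq0 eqn0Ngt prime_gt0.
have cAX : GRing.comm A X by rewrite /GRing.comm eX -!mulmxE conv_mxC.
have cSAs : GRing.comm S As.
  by rewrite /As eA; apply: commrD; [apply: commr_refl | exact: cSN].
have cNAs : GRing.comm N As.
  by rewrite /As eA; apply: commrD; [exact/commr_sym/cSN | apply: commr_refl].
have cTX : GRing.comm (tensG H S) X.
  by rewrite /GRing.comm /X -!mulmxE -!tensM !mulmxE cSAs.
have eSQ : tensG H S ^+ Q = A ^+ Q.
  have -> : A = X + D by rewrite /D addrC subrK.
  rewrite (frobDk pr (ch _)); last by apply: commrB; [exact/commr_sym | apply: commr_refl].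
  rewrite nDQ addr0 -tensX /X.
  have -> : S = As + - N by rewrite /As eA addrK.
  rewrite (frobDk pr (ch _)); last by apply: commrN; apply: commr_sym.
  have nNQ : N ^+ (p ^ (e + k)) = 0 := exp_ge kQ nN.
  by rewrite exprNn nNQ mulr0 addr0 tensX.
have [rs urs Ers] := diag_prod dS.
have Erst : \prod_(r <- rs) (tensG H S - r%:M) = 0.
  rewrite (eq_bigr (fun r => tensG H (S - r%:M))); last by move=> r _; rewrite tensB tens_scalar.
  by rewrite -tens_prod Ers tens0.
have cAT : GRing.comm A (tensG H S).
  rewrite /GRing.comm -!mulmxE; apply: (key pr chR (k := e + k)); first by exists rs.
  by rewrite eSQ mulmxE; apply: commrX; apply: commr_refl.
split; first exact: prod_diag urs Erst.
exists (A - tensG H S); split; last by rewrite addrC subrK.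
- exists Q; rewrite iter_mulmx.
  have eN : tensG H N = X - tensG H S by rewrite /X /As eA tensD addrC addKr.
  have -> : A - tensG H S = D + tensG H N by rewrite eN /D addrA subrK.
  have cDX : GRing.comm D X.
    by apply/commr_sym/commrB; [exact/commr_sym | apply: commr_refl].
  have cDT : GRing.comm D (tensG H S).
    by apply/commr_sym/commrB; [exact/commr_sym | exact: cTX].
  rewrite (frobDk pr (ch _)).
    by rewrite nDQ add0r -tensX (exp_ge kQ nN) tens0.
  rewrite eN.
  exact: commrB cDX cDT.
- rewrite !mulmxE; apply: commrB; [exact/commr_sym | apply: commr_refl].
Qed.
End PartA.

Lemma harm_det (R : fieldType) (G : finZmodType) (b : G -> R) :
  (exists f : {ffun G -> R}, f != 0 /\ harmonic b f) <-> \det (conv_mx b) = 0.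
Proof.
rewrite -det_tr; split.
  case=> f [nf hf]; apply/eqP/det0P.
  exists (\row_i f (enum_val i)).
    apply: contra nf => /eqP v0; apply/eqP/ffunP => x.
    by move/matrixP: v0 => /(_ 0 (enum_rank x)); rewrite !mxE enum_rankK ffunE.
  apply/matrixP => i j; rewrite !mxE -[RHS](hf (enum_val j)) -(sum_enum (fun h => f h * b (enum_val j - h))).
  by apply: eq_bigr => k _; rewrite !mxE.
move/eqP/det0P => [v nv hv].
exists [ffun x => v 0 (enum_rank x)]; split.
  apply: contra nv => /eqP f0; apply/eqP/matrixP => i j.
  by rewrite ord1 mxE -[j]enum_valK -(ffunE (fun x => v 0 (enum_rank x))) f0 ffunE.
move=> g; move/matrixP: hv => /(_ 0 (enum_rank g)).
rewrite !mxE => hv0; apply: eq_trans _ hv0; rewrite -(sum_enum (fun h => _ h * b (g - h))); apply: eq_bigr => k _.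
by rewrite !mxE ffunE enum_valK enum_rankK.
Qed.

Lemma det0_cp (R : fieldType) n (M : 'M[R]_n) :
  (\det M == 0) = ((char_poly M).[0] == 0).
Proof.
by rewrite horner_coef0 char_poly_det mulf_eq0 signr_eq0.
Qed.

Theorem proposition1p2 (K : fieldType) (p : nat) (L : closedFieldType)
    (iota : {rmorphism K -> L}) (F H : finZmodType) (a : F * H -> K) :
  p \in [pchar K] -> p.-nat #|H| ->
  (forall S : 'M[L]_#|F|,
      ss_part (map_mx iota (conv_mx (astar a))) S ->
      ss_part (map_mx iota (conv_mx a)) (tens1 H S)) /\
  char_poly (conv_mx a) = char_poly (conv_mx (astar a)) ^+ #|H| /\
  ((exists f : {ffun F * H -> K}, f != 0 /\ harmonic a f) <->
   (exists f : {ffun F -> K}, f != 0 /\ harmonic (astar a) f)).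
Proof.
move=> pK pH.
have pr := pcharf_prime pK.
have chK : p%:R = 0 :> K := pcharf0 pK.
have chL : p%:R = 0 :> L by rewrite -(rmorph_nat iota) chK rmorph0.
have cardH : #|H| = (p ^ logn p #|H|)%N by rewrite -p_part part_pnat_id.
have partb : char_poly (conv_mx a) = char_poly (conv_mx (astar a)) ^+ #|H|.
  have -> : conv_mx a = tensG H (conv_mx (astar a)) + (conv_mx a - conv_mx (cstar a)).
    by rewrite tens_conv addrC subrK.
  rewrite (cp_nil pr chK (k := logn p #|H|)).
  - exact: cp_tens.
  - by rewrite tens_conv mulmxBr mulmxBl (conv_mxC (cstar a) a).
  - exact: conv_nilp.
split.
  move=> S.
  have -> : map_mx iota (conv_mx (astar a)) = conv_mx (astar (fun u => iota (a u))).
    by apply/matrixP => i j; rewrite !mxE rmorph_sum.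
  have -> : map_mx iota (conv_mx a) = conv_mx (fun u => iota (a u)).
    by apply/matrixP => i j; rewrite !mxE.
  rewrite tens1E; exact: (@part_a L p pr chL F H _ cardH (fun u => iota (a u)) S).
split; first exact: partb.
split => /harm_det /eqP h; apply/harm_det/eqP.
  by move: h; rewrite det0_cp partb horner_exp expf_eq0 -det0_cp => /andP [].
rewrite det0_cp partb horner_exp expf_eq0 -det0_cp h andbT.
by apply/card_gt0P; exists 0.
Qed.
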